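(* For all $\lambda>0$ and all even $L\ge2$, $$Z^{\mathrm{per}}_{R_{2\times L},\lambda}(E)\ge\Big(1+\tfrac12\lambda^{-1/2}\Big)^L,$$ where $E$ is the event that every tile has even horizontal parity (equivalently, $\sigma(x,y)=1$ implies $x$ odd).
   Context: Tiles: $T_{(x,y)}=[x-1,x+1]\times[y-1,y+1]$; $\Omega=\{\sigma\in\{0,1\}^{\mathbb{Z}^2}: \sigma(u)=\sigma(v)=1,u\ne v\Rightarrow\mathrm{int}(T_u)\cap\mathrm{int}(T_v)=\emptyset\}$. The parity of the tile centered at $(x,y)$ is $(x-1\bmod 2,\,y-1\bmod2)$; its first component is the horizontal parity. $R_{K\times L}=[0,K]\times[0,L]$. Faces are unit squares with integer corners, vacant if in no tile. For a rectangle $\Lambda$, $w_{\Lambda,\lambda}(\sigma)=\lambda^{-\frac14\#\{\text{vacant faces}\subset\Lambda\}}$; $\Omega^{\mathrm{per}}_\Lambda$ = configurations in $\Omega$ periodic under translations by $(\mathrm{Width}\Lambda,0)$ and $(0,\mathrm{Height}\Lambda)$; for an event $E$, $Z^{\mathrm{per}}_{\Lambda,\lambda}(E)=\sum_{\sigma\in E\cap\Omega^{\mathrm{per}}_\Lambda}w_{\Lambda,\lambda}(\sigma)$. *)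

(* Defs.v *)
From HB Require Import structures.
From mathcomp Require Import all_boot all_order all_algebra.
From mathcomp Require Import all_classical all_reals all_analysis.
Set Implicit Arguments. Unset Strict Implicit. Unset Printing Implicit Defensive.
Import Order.TTheory GRing.Theory Num.Theory.
Local Open Scope classical_set_scope.
Local Open Scope ring_scope.

(* Configurations sigma : Z^2 -> {0,1}, with 1 encoded as true. *)
Definition config := (int * int -> bool)%type.

Section Tiles.
Variable R : realType.

Definition in_tile (u : int * int) (p : R * R) : Prop :=
  (u.1%:~R - 1 <= p.1 <= u.1%:~R + 1) /\ (u.2%:~R - 1 <= p.2 <= u.2%:~R + 1).

Definition in_int_tile (u : int * int) (p : R * R) : Prop :=
  (u.1%:~R - 1 < p.1 < u.1%:~R + 1) /\ (u.2%:~R - 1 < p.2 < u.2%:~R + 1).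

Definition Omega : set config :=
  [set sigma | forall u v : int * int, sigma u -> sigma v -> u <> v ->
     forall p : R * R, ~ (in_int_tile u p /\ in_int_tile v p)].

Definition in_face (f : int * int) (p : R * R) : Prop :=
  (f.1%:~R <= p.1 <= f.1%:~R + 1) /\ (f.2%:~R <= p.2 <= f.2%:~R + 1).

Definition vacant (sigma : config) (f : int * int) : Prop :=
  ~ exists u : int * int, sigma u /\ (forall p, in_face f p -> in_tile u p).

(* Number of vacant faces contained in R_{K x L} = [0,K] x [0,L];
   these faces are exactly [i,i+1] x [j,j+1] with 0 <= i < K, 0 <= j < L. *)
Definition nvacant (K L : nat) (sigma : config) : nat :=
  #|[set ij : 'I_K * 'I_L | `[< vacant sigma ((ij.1 : nat)%:Z, (ij.2 : nat)%:Z) >] ]|.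

Definition weight (K L : nat) (lambda : R) (sigma : config) : R :=
  lambda `^ (- (1 / 4) * (nvacant K L sigma)%:R).

Definition periodic (K L : nat) (sigma : config) : Prop :=
  forall u : int * int,
    sigma (u.1 + K%:Z, u.2) = sigma u /\ sigma (u.1, u.2 + L%:Z) = sigma u.

Definition Omega_per (K L : nat) : set config :=
  Omega `&` [set sigma | periodic K L sigma].

Definition Zper (K L : nat) (lambda : R) (E : set config) : R :=
  \sum_(sigma \in E `&` Omega_per K L) weight K L lambda sigma.

End Tiles.

Definition horiz_parity (u : int * int) : int := ((u.1 - 1) %% 2)%Z.

Definition E_even_horiz : set config :=
  [set sigma | forall u : int * int, sigma u -> horiz_parity u = 0].

(* Main.v *)
Require Import Defs.
From HB Require Import structures.
From mathcomp Require Import all_boot all_order all_algebra.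
From mathcomp Require Import all_classical all_reals all_analysis.
Import Order.TTheory GRing.Theory Num.Theory.
Local Open Scope classical_set_scope.
Local Open Scope ring_scope.
From mathcomp Require Import ring lra zify.
Section Core.
Variable R : realType.
Variable a : R.
Hypothesis a0 : 0 <= a.

Definition ttw (x y : bool) : R :=
  if x then (if y then 0 else 1) else (if y then 1 else a).

Let s : R := Num.sqrt (a ^+ 2 + 4).
Lemma s2 : s ^+ 2 = a ^+ 2 + 4.
Proof. rewrite sqr_sqrtr //; apply: addr_ge0; [exact: sqr_ge0 | by []]. Qed.
Lemma s_ge2 : 2 <= s.
Proof.
have h0 : 0 <= s by exact: sqrtr_ge0.
have := s2; have := sqr_ge0 a => ha hs. nra.
Qed.
Lemma s_neq0 : s != 0.
Proof. apply/eqP => h; have := s_ge2; rewrite h; lra. Qed.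

Definition lam (k : bool) : R := if k then (a + s) / 2 else (a - s) / 2.
Definition mm (k : bool) : R := if k then s^-1 else - s^-1.
Definition vv (k x : bool) : R := if x then 1 else lam k.

Lemma decomp x y : ttw x y = \sum_k mm k * (vv k x * vv k y).
Proof.
have hs := s_neq0; have h2 := s2.
rewrite big_bool /ttw /mm /vv /lam; case: x; case: y => /=.
- by field.
- by field.
- by field.
- field. done.
Qed.

Definition gg (k k' : bool) : R := mm k * \sum_x vv k x * vv k' x.

Lemma ggE k k' : gg k k' = if k == k' then lam k else 0.
Proof.
have hs := s_neq0; have h2 := s2.
have h1 : 1 * 1 = (s ^+ 2 - a ^+ 2) / 4 :> R by rewrite h2; field.
rewrite /gg big_bool /mm /vv /lam; case: k; case: k' => /=.
all: by rewrite h1; field.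
Qed.

Lemma transferZ L :
  \sum_(f : {ffun 'I_L -> bool}) \prod_(j : 'I_L) ttw (f j) (f (ordS j)) =
  \sum_(k : {ffun 'I_L -> bool}) \prod_(j : 'I_L) gg (k j) (k (ord_pred j)).
Proof.
under eq_bigr => f _ do under eq_bigr => j _ do rewrite decomp.
under eq_bigr => f _ do rewrite bigA_distr_bigA /=.
rewrite exchange_big /=; apply: eq_bigr => k _.
transitivity (\sum_(f : {ffun 'I_L -> bool}) (\prod_j mm (k j)) *
   \prod_j (vv (k j) (f j) * vv (k (ord_pred j)) (f j))).
  apply: eq_bigr => f _; rewrite big_split /= big_split /=; congr (_ * _).
  rewrite [RHS]big_split /=; congr (_ * _).
  rewrite [RHS](reindex_inj (@ordS_inj L)) /=.
  by apply: eq_bigr => j _; rewrite ordSK.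
rewrite -big_distrr /=.
rewrite -(bigA_distr_bigA (fun j x => vv (k j) x * vv (k (ord_pred j)) x)) /=.
rewrite -big_split /=.
by apply: eq_bigr => j _.
Qed.

Lemma iter_ordS_val L m (j : 'I_L) : val (iter m (@ordS L) j) = ((j + m) %% L)%N.
Proof.
elim: m => [|m IH] /=; first by rewrite addn0 modn_small.
by rewrite IH -addn1 modnDml -addnA addn1.
Qed.

Lemma termge0 L (k : {ffun 'I_L -> bool}) : ~~ odd L ->
  0 <= \prod_(j : 'I_L) gg (k j) (k (ord_pred j)).
Proof.
move=> evL.
case: (boolP [forall j, k j == k (ord_pred j)]) => [/forallP H|]; last first.
  move/forallPn => [j hj]; rewrite (bigD1 j) //= ggE (negbTE hj) mul0r //.
case: L k evL H => [|n] k evL H; first by rewrite big_ord0.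
have Hs j : k (ordS j) = k j by have := eqP (H (ordS j)); rewrite ordSK.
have Hit m j : k (iter m (@ordS n.+1) j) = k j.
  by elim: m => [|m IH] //=; rewrite Hs.
have Hc i : k i = k ord0.
  have -> : i = iter i (@ordS n.+1) ord0.
    by apply: val_inj; rewrite iter_ordS_val add0n modn_small.
  by rewrite Hit.
under eq_bigr => j _ do rewrite !Hc ggE eqxx.
rewrite prodr_const; apply: exprn_even_ge0; by rewrite cardT size_enum_ord.
Qed.

Lemma lower L : ~~ odd L ->
  (1 + a / 2) ^+ L <= \sum_(f : {ffun 'I_L -> bool}) \prod_(j : 'I_L) ttw (f j) (f (ordS j)).
Proof.
move=> evL; rewrite transferZ (bigD1 [ffun => true]) //=.
apply: (@le_trans _ _ (lam true ^+ L)).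
  apply: lerXn2r; rewrite ?nnegrE /lam.
  - have := a0; lra.
  - have := s_ge2; have := a0; lra.
  - have := s_ge2; have := a0; lra.
under eq_bigr => j _ do rewrite !ffunE ggE eqxx.
rewrite prodr_const card_ord lerDl; apply: sumr_ge0 => k _; exact: termge0.
Qed.
End Core.

Definition idx n (y : int) : 'I_n.+1 := inord `|(y %% (n.+1)%:Z)%Z|%N.

Lemma idx_val n (y : int) : ((idx n y : nat)%:Z = (y %% (n.+1)%:Z)%Z)%R.
Proof. rewrite /idx inordK; lia. Qed.

Lemma idx_eq n (y z : int) : (y %% (n.+1)%:Z)%Z = (z %% (n.+1)%:Z)%Z -> idx n y = idx n z.
Proof. by rewrite /idx => ->. Qed.

Lemma idx_ord n (j : 'I_n.+1) : idx n (j : nat)%:Z = j.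
Proof. apply: val_inj => /=; rewrite /idx; case: j => m hm /=; by rewrite modz_nat modn_small // inordK. Qed.

Lemma idxS n (y : int) : idx n (y + 1) = ordS (idx n y).
Proof.
apply: val_inj => /=; rewrite /idx.
have hk : ((`|(y %% (n.+1)%:Z)%Z|%N)%:Z = (y %% (n.+1)%:Z)%Z)%R by lia.
have hb : (`|(y %% (n.+1)%:Z)%Z|%N < n.+1)%N by lia.
rewrite (inordK hb) inordK; last by lia.
rewrite -modzDml -hk -PoszD addn1 modz_nat.
by [].
Qed.

Definition ext n (f : {ffun 'I_n.+1 -> bool}) : config :=
  fun u => ((u.1 %% 2)%Z == 1%Z) && f (idx n u.2).
Definition indep n (f : {ffun 'I_n.+1 -> bool}) : bool :=
  [forall j, ~~ (f j && f (ordS j))].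
Arguments ext {n}. Arguments indep {n}.

Lemma ext_E n (f : {ffun 'I_n.+1 -> bool}) : E_even_horiz (ext f).
Proof. move=> u /andP[/eqP h _]; rewrite /horiz_parity; lia. Qed.

Lemma ext_per n (f : {ffun 'I_n.+1 -> bool}) : Defs.periodic 2 n.+1 (ext f).
Proof.
move=> [x y] /=; rewrite /ext /=; split.
  by have -> : ((x + 2%:Z) %% 2 = x %% 2)%Z by lia.
by rewrite (@idx_eq n _ y) // modzDr.
Qed.

Lemma ltI (R : realType) (x y : int) (q : R) :
  x%:~R - 1 < q -> q < y%:~R + 1 -> (x < y + 2)%R.
Proof.
move=> h1 h2; rewrite -(ltr_int R) intrD.
have -> : (2%:~R : R) = 2 by [].
lra.
Qed.

Lemma ext_Omega (R : realType) n (f : {ffun 'I_n.+1 -> bool}) :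
  indep f -> Defs.Omega R (ext f).
Proof.
move=> /forallP hind [u1 u2] [v1 v2] /andP[/eqP hu fu] /andP[/eqP hv fv] neq
  [p1 p2] [[/andP[h1 h2] /andP[h3 h4]] [/andP[h5 h6] /andP[h7 h8]]] /=.
move: hu hv fu fv neq h1 h2 h3 h4 h5 h6 h7 h8 => /= hu hv fu fv neq h1 h2 h3 h4 h5 h6 h7 h8.
have a1 := @ltI R _ _ _ h1 h6; have a2 := @ltI R _ _ _ h5 h2.
have a3 := @ltI R _ _ _ h3 h8; have a4 := @ltI R _ _ _ h7 h4.
have e1 : u1 = v1 by lia.
have : (v2 = u2 + 1 \/ u2 = v2 + 1 \/ u2 = v2)%R by lia.
case=> [e|[e|e]].
- by have := hind (idx n u2); rewrite -idxS -e fu fv.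
- by have := hind (idx n v2); rewrite -idxS -e fu fv.
- by apply: neq; rewrite e1 e.
Qed.

Lemma face_tile (R : realType) (i j : int) (u : int * int) :
  (forall p : R * R, in_face (i, j) p -> in_tile u p) <->
  (u.1 - 1 <= i /\ i <= u.1 /\ u.2 - 1 <= j /\ j <= u.2)%R.
Proof.
split.
  move=> h.
  have [/andP[c1 c2] /andP[c3 c4]] : in_tile u (((i + 1)%:~R : R), ((j + 1)%:~R : R)).
    apply: h; rewrite /in_face /= !intrD; split; apply/andP; split; lra.
  have [/andP[d1 d2] /andP[d3 d4]] : in_tile u ((i%:~R : R), (j%:~R : R)).
    apply: h; rewrite /in_face /=; split; apply/andP; split; lra.
  move: c1 c2 c3 c4 d1 d2 d3 d4 => /= c1 c2 c3 c4 d1 d2 d3 d4.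
  rewrite !intrD in c2 c4.
  have e1 : ((u.1 - 1)%:~R : R) <= i%:~R by rewrite intrB.
  have e2 : ((i%:~R : R) <= u.1%:~R) by lra.
  have e3 : ((u.2 - 1)%:~R : R) <= j%:~R by rewrite intrB.
  have e4 : ((j%:~R : R) <= u.2%:~R) by lra.
  rewrite !ler_int in e1 e2 e3 e4.
  by [].
move=> [e1 [e2 [e3 e4]]] [p1 p2] [/andP[f1 f2] /andP[f3 f4]] /=.
move: f1 f2 f3 f4 => /= f1 f2 f3 f4.
have g1 : ((u.1 - 1)%:~R : R) <= i%:~R by rewrite ler_int.
have g2 : ((i%:~R : R) <= u.1%:~R) by rewrite ler_int.
have g3 : ((u.2 - 1)%:~R : R) <= j%:~R by rewrite ler_int.
have g4 : ((j%:~R : R) <= u.2%:~R) by rewrite ler_int.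
rewrite !intrB !mulr1z in g1 g3.
split; apply/andP; split => /=; lra.
Qed.

Lemma vacant_ext (R : realType) n (f : {ffun 'I_n.+1 -> bool}) (i : 'I_2) (j : 'I_n.+1) :
  Defs.vacant R (ext f) ((i : nat)%:Z, (j : nat)%:Z) <-> (~~ f j && ~~ f (ordS j)).
Proof.
have hi := ltn_ord i.
split.
  move=> hv; apply/andP; split; apply/negP => fj; apply: hv.
    exists (1%:Z, (j : nat)%:Z); split.
      by rewrite /ext /= idx_ord fj.
    apply/face_tile => /=; lia.
  exists (1%:Z, (j : nat)%:Z + 1); split.
    by rewrite /ext /= idxS idx_ord fj.
  apply/face_tile => /=; lia.
move=> /andP[nj nsj] [[u1 u2] [/andP[_ fu] /face_tile /= hc]].
have : (u2 = (j : nat)%:Z \/ u2 = (j : nat)%:Z + 1)%R by lia.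
case=> e; move: fu; rewrite /= e ?idxS idx_ord.
  by rewrite (negbTE nj).
by rewrite (negbTE nsj).
Qed.

Lemma nvacant_ext (R : realType) n (f : {ffun 'I_n.+1 -> bool}) :
  Defs.nvacant R 2 n.+1 (ext f) = (2 * #|[set j | ~~ f j && ~~ f (ordS j)]%SET|)%N.
Proof.
rewrite /Defs.nvacant.
transitivity #|(finset.setX [set: 'I_2] [set j | ~~ f j && ~~ f (ordS j)])%SET|;
  last by rewrite cardsX cardsT card_ord.
apply: eq_card => -[i j]; rewrite !inE /=.
apply/idP/idP => [/set_mem /asboolP /vacant_ext // | h].
by apply/mem_set/asboolP/vacant_ext.
Qed.

Lemma weight_ext (R : realType) n (lam : R) (f : {ffun 'I_n.+1 -> bool}) :
  0 < lam -> indep f ->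
  Defs.weight 2 n.+1 lam (ext f) = \prod_j @ttw R (lam `^ (- (1 / 2))) (f j) (f (ordS j)).
Proof.
move=> hl /forallP hind.
rewrite /Defs.weight nvacant_ext.
set a := lam `^ (- (1 / 2)).
transitivity (\prod_(j | ~~ f j && ~~ f (ordS j)) a).
  rewrite prodr_const cardsE natrM mulrA.
  have -> : - (1 / 4) * 2%:R = - (1 / 2) :> R by field.
  by rewrite powRrM powR_mulrn // powR_ge0.
rewrite big_mkcond /=; apply: eq_bigr => j _; have := hind j.
by rewrite /ttw; case: (f j); case: (f (ordS j)).
Qed.

Lemma per_mod (g : int -> bool) (d : int) :
  (forall x, g (x + d) = g x) -> forall x, g x = g (x %% d)%Z.
Proof.
move=> hg x.
have hn : forall (m : nat) y, g (y + m%:Z * d) = g y.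
  elim=> [|m IH] y; first by rewrite mul0r addr0.
  by rewrite -[m.+1]addn1 PoszD mulrDl mul1r addrA hg IH.
have e := divz_eq x d.
case: (x %/ d)%Z e => m e.
  by rewrite {1}e addrC hn.
have -> : (x %% d)%Z = x + (m.+1)%:Z * d.
  by rewrite {2}e NegzE; ring.
by rewrite hn.
Qed.

Lemma per_ext n (sigma : config) : Defs.periodic 2 n.+1 sigma ->
  sigma = (fun u => [ffun ij : 'I_2 * 'I_n.+1 => sigma ((ij.1 : nat)%:Z, (ij.2 : nat)%:Z)]
                      (idx 1 u.1, idx n u.2)).
Proof.
move=> hp; apply: funext => -[x y]; rewrite ffunE /= !idx_val.
rewrite (@per_mod (fun x => sigma (x, y)) 2%:Z); last by move=> z; case: (hp (z, y)).
rewrite (@per_mod (fun y => sigma ((x %% 2)%Z, y)) (n.+1)%:Z) //.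
by move=> z; case: (hp ((x %% 2)%Z, z)).
Qed.

Theorem proposition4p2 (R : realType) (lambda : R) (L : nat) :
  0 < lambda -> (2 <= L)%N -> ~~ odd L ->
  (1 + (1 / 2) * lambda `^ (- (1 / 2))) ^+ L
    <= Zper 2 L lambda E_even_horiz.
Proof.
case: L => [//|n] hl hL hev.
set a := lambda `^ (- (1 / 2)).
have a0 : 0 <= a by apply: powR_ge0.
set A := E_even_horiz `&` Omega_per R 2 n.+1.
set B := (@ext n) @` [set f : {ffun 'I_n.+1 -> bool} | indep f].
have BA : B `<=` A.
  move=> _ [f hf <-]; split; first exact: ext_E.
  by split; [exact: ext_Omega | exact: ext_per].
have Afin : finite_set A.
  apply: (@sub_finite_set _ _
    ((fun h : {ffun 'I_2 * 'I_n.+1 -> bool} => fun u : int * int => h (idx 1 u.1, idx n u.2)) @` setT)).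
    move=> s [_ [_ hp]]; exists [ffun ij : 'I_2 * 'I_n.+1 => s ((ij.1 : nat)%:Z, (ij.2 : nat)%:Z)] => //.
    by rewrite [RHS](@per_ext n s hp).
  exact: finite_image.
rewrite /Zper -/A (fsbigID B) //.
have -> : A `&` B = B by apply/setIidr.
rewrite -[X in X <= _]addr0; apply: lerD; last first.
  by apply: fsumr_ge0 => x _; apply: powR_ge0.
rewrite fsbig_image; last first.
  move=> f g _ _ e; apply/ffunP => j.
  have := congr1 (fun s : config => s (1%:Z, (j : nat)%:Z)) e.
  by rewrite /ext /= idx_ord.
have -> : \sum_(i \in [set f : {ffun 'I_n.+1 -> bool} | indep f]) Defs.weight 2 n.+1 lambda (ext i) =
   \sum_(f <- enum (predT : {pred {ffun 'I_n.+1 -> bool}}) | indep f)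
                 Defs.weight 2 n.+1 lambda (ext f).
  rewrite [RHS]bigfs //; first exact: enum_uniq.
  by move=> i _; rewrite mem_enum.
rewrite big_enum_cond /=.
under eq_bigr => f hf do rewrite (@weight_ext R n lambda f hl hf).
rewrite big_mkcond /=.
under eq_bigr => f _.
  have -> : (if indep f then \prod_j @ttw R a (f j) (f (ordS j)) else 0) =
            \prod_j @ttw R a (f j) (f (ordS j)).
    case: ifP => // /negbT /forallPn [j]; rewrite negbK => /andP[h1 h2].
    by rewrite (bigD1 j) //= h1 h2 /ttw mul0r.
  over.
have -> : 1 / 2 * a = a / 2 by rewrite mul1r mulrC.
exact: (@lower R a a0 n.+1 hev).
Qed.
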